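(* Let $V=\{1,\dots,n\}$, let $(\bar\Omega,\mathcal F,\mathbb P)$ be a probability space, and let $\sigma:\{0,1\}^n\times\bar\Omega\to\mathbb R$ be such that for every $\omega\in\bar\Omega$ the set function $X\mapsto\sigma(X,\omega)$ (identifying $X\subseteq V$ with its characteristic vector $x\in\{0,1\}^n$) is nondecreasing and submodular, and for each $x$ the random variable $\sigma(x)=\sigma(x,\cdot)$ is integrable. Let $\mathcal X\subseteq\{0,1\}^n$ and $\alpha\in(0,1]$. Fix $\bar x\in\{0,1\}^n$ with support $\bar X=\{j\in V:\bar x_j=1\}$. Then for every $x\in\mathcal X$ and every $\psi\in\mathbb R$ with $\psi\le \mathrm{CVaR}_\alpha(\sigma(x))$, we have $$\psi\le \mathrm{CVaR}_\alpha(\sigma(\bar x))+\sum_{j\in V\setminus\bar X}\big(\mathrm{CVaR}_1(\sigma(\bar x+\mathbf e_j))-\mathrm{CVaR}_\alpha(\sigma(\bar x))\big)x_j .$$ That is, this inequality is valid for the set $\{(x,\psi): x\in\mathcal X,\ \psi\le\mathrm{CVaR}_\alpha(\sigma(x))\}$.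
   Context: For a random variable $Y$ with finite expectation and $\alpha\in(0,1]$, the conditional value-at-risk is $\mathrm{CVaR}_\alpha(Y)=\max_{\eta\in\mathbb R}\{\eta-\frac1\alpha\mathbb E([\eta-Y]_+)\}$, where $[z]_+=\max(z,0)$; in particular $\mathrm{CVaR}_1(Y)=\mathbb E[Y]$. $\mathbf e_j$ denotes the $j$-th unit vector in $\mathbb R^n$. *)

(* Defs.v *)
From HB Require Import structures.
From mathcomp Require Import all_boot all_order all_algebra.
From mathcomp Require Import all_classical all_reals all_analysis.
Set Implicit Arguments. Unset Strict Implicit. Unset Printing Implicit Defensive.
Import Order.TTheory GRing.Theory Num.Theory.
Local Open Scope classical_set_scope.
Local Open Scope ring_scope.

Definition pospart {R : realType} (z : R) : R := Num.max z 0.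

(* CVaR_alpha(Y) = max_{eta in R} { eta - (1/alpha) E([eta - Y]_+) },
   taken as a supremum in the extended reals (it is attained and finite
   for integrable Y), and then converted to a real number with fine. *)
Definition CVaR {d : measure_display} {T : measurableType d} {R : realType}
  (P : probability T R) (alpha : R) (Y : T -> R) : R :=
  fine (ereal_sup [set ((eta%:E - (alpha^-1)%:E *
          \int[P]_w (pospart (eta - Y w))%:E)%E) | eta in [set: R]]).

Definition nondecreasing_setfun {n : nat} {R : realType}
  (f : {set 'I_n} -> R) : Prop :=
  forall A B : {set 'I_n}, A \subset B -> f A <= f B.

Definition submodular_setfun {n : nat} {R : realType}
  (f : {set 'I_n} -> R) : Prop :=
  forall A B : {set 'I_n}, f (A :|: B) + f (A :&: B) <= f A + f B.

(* Main.v *)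
Require Import Defs.
From HB Require Import structures.
From mathcomp Require Import all_boot all_order all_algebra.
From mathcomp Require Import all_classical all_reals all_analysis.
From mathcomp Require Import lra.
Import Order.TTheory GRing.Theory Num.Theory.
Local Open Scope classical_set_scope.
Local Open Scope ring_scope.

Module CVH.
Import numFieldNormedType.Exports.
Set Implicit Arguments. Unset Strict Implicit.
Section Helpers.
Context (d : measure_display) (T : measurableType d) (R : realType)
  (P : probability T R).

Definition integ (Y : T -> R) := P.-integrable [set: T] (fun w => (Y w)%:E).
Definition Ex (Y : T -> R) : R := \int[P]_w Y w.
Definition tr (a eta : R) (Y : T -> R) : R :=
  eta - a^-1 * \int[P]_w (pospart (eta - Y w)).

Lemma integB_cst Y eta : integ Y -> integ (fun w => eta - Y w).
Proof.
move=> hY.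
have := integrableB measurableT (@finite_measure_integrable_cst _ _ _ P _ eta measurableT) hY.
by apply: eq_integrable => // w _ /=; rewrite EFinB.
Qed.

Lemma integ_pos Y eta : integ Y -> integ (fun w => pospart (eta - Y w)).
Proof.
move=> hY; have := integrable_funepos measurableT (integB_cst eta hY).
by apply: eq_integrable => // w _ /=; rewrite funeposE /pospart EFin_max.
Qed.

Lemma termE a eta Y : integ Y ->
  (eta%:E - (a^-1)%:E * \int[P]_w (pospart (eta - Y w))%:E)%E = (tr a eta Y)%:E.
Proof.
move=> hY; rewrite -(fineK (integrable_fin_num measurableT (integ_pos eta hY))).
by rewrite /tr -EFinM -EFinB.
Qed.

Lemma ExB eta Y : integ Y -> \int[P]_w (eta - Y w) = eta - Ex Y.
Proof.
move=> hY; rewrite RintegralB //; last exact: finite_measure_integrable_cst.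
rewrite Rintegral_cst //.
rewrite (_ : fine _ = 1%R) ?mulr1 //.
by have := probability_setT P => /= ->.
Qed.

Lemma tr_le_Ex a eta Y : 0 < a -> a <= 1 -> integ Y -> tr a eta Y <= Ex Y.
Proof.
move=> a0 a1 hY; rewrite /tr.
have h1 : \int[P]_w (eta - Y w) <= \int[P]_w (pospart (eta - Y w)).
  apply: le_Rintegral => //; [exact: integB_cst| exact: integ_pos|].
  by move=> w _; rewrite /pospart le_max lexx.
have h0 : 0 <= \int[P]_w (pospart (eta - Y w)).
  by apply: Rintegral_ge0 => w _; rewrite /pospart le_max lexx orbT.
have h2 : \int[P]_w (pospart (eta - Y w)) <= a^-1 * \int[P]_w (pospart (eta - Y w)).
  by rewrite ler_peMl // invr_ge1 // unitfE gt_eqF.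
move: h1; rewrite ExB // => h1; lra.
Qed.

Lemma tr_mono a eta Y Z : 0 < a -> integ Y -> integ Z -> (forall w, Y w <= Z w) ->
  tr a eta Y <= tr a eta Z.
Proof.
move=> a0 hY hZ YZ; rewrite /tr lerD2l lerN2 ler_pM2l ?invr_gt0 //.
apply: le_Rintegral => //; [exact: integ_pos | exact: integ_pos |].
move=> w _; rewrite /pospart ge_max !le_max lexx orbT andbT.
by apply/orP; left; have := YZ w; lra.
Qed.

Definition CV a Y := sup [set tr a eta Y | eta in [set: R]].

Lemma CV_ne a Y : [set tr a eta Y | eta in [set: R]] !=set0.
Proof. by exists (tr a 0 Y); exists 0. Qed.

Lemma CV_ub a Y : 0 < a -> a <= 1 -> integ Y ->
  ubound [set tr a eta Y | eta in [set: R]] (Ex Y).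
Proof. by move=> a0 a1 hY z [eta _ <-]; exact: tr_le_Ex. Qed.

Lemma CVaRE a Y : 0 < a -> a <= 1 -> integ Y -> CVaR P a Y = CV a Y.
Proof.
move=> a0 a1 hY; rewrite /CVaR.
have -> : [set (eta%:E - (a^-1)%:E * \int[P]_w (pospart (eta - Y w))%:E)%E
           | eta in [set: R]] = EFin @` [set tr a eta Y | eta in [set: R]].
  apply/seteqP; split => z /=.
    by move=> [eta _ <-]; exists (tr a eta Y); [exists eta|rewrite termE].
  by move=> [r [eta _ <-] <-]; exists eta => //; rewrite termE.
rewrite ereal_sup_EFin //; last exact: CV_ne.
by exists (Ex Y); exact: CV_ub.
Qed.

Lemma CV_le_Ex a Y : 0 < a -> a <= 1 -> integ Y -> CV a Y <= Ex Y.
Proof. by move=> a0 a1 hY; apply: ge_sup; [exact: CV_ne | exact: CV_ub]. Qed.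

Lemma CV_mono a Y Z : 0 < a -> a <= 1 -> integ Y -> integ Z ->
  (forall w, Y w <= Z w) -> CV a Y <= CV a Z.
Proof.
move=> a0 a1 hY hZ YZ; apply: ge_sup; first exact: CV_ne.
move=> z [eta _ <-]; apply: (le_trans (tr_mono eta a0 hY hZ YZ)).
apply: ub_le_sup; last by exists eta.
by exists (Ex Z); exact: CV_ub.
Qed.

Lemma Ex_le_CV1 Y : integ Y -> Ex Y <= CV 1 Y.
Proof.
move=> hY.
have hint n : integ (fun w => n%:R - pospart (n%:R - Y w)).
  exact: integB_cst (integ_pos _ hY).
have htr n : tr 1 n%:R Y = \int[P]_w (n%:R - pospart (n%:R - Y w)).
  by rewrite /tr invr1 mul1r ExB //; exact: integ_pos.
have hcvg : (\int[P]_w ((n%:R - pospart (n%:R - Y w))%:E))%E @[n --> \oo] -->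
    (\int[P]_w (Y w)%:E)%E.
  apply: (@dominated_cvg _ _ _ P _ measurableT _ _ (abse \o (fun w => (Y w)%:E))).
  - by move=> n; exact: (measurable_int _ (hint n)).
  - move=> w _; apply: cvg_near_cst.
    exists (Num.truncn `|Y w|).+1 => // n /= hn.
    have h1 : Y w <= n%:R.
      apply: (le_trans (ler_norm _)); apply: ltW.
      apply: (lt_le_trans (truncnS_gt _)); by rewrite ler_nat.
    rewrite /pospart; congr EFin.
    rewrite max_l; lra.
  - by [].
  - exact: integrable_abse hY.
  - move=> n w _; rewrite /= lee_fin /pospart.
    have [h|h] := leP (n%:R - Y w) 0.
      rewrite subr0 ger0_norm // ?ler0n //.
      by rewrite (le_trans _ (ler_norm _)) //; lra.
    rewrite (_ : _ - _ = Y w) //; lra.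
have hfin : (\int[P]_w (Y w)%:E)%E \is a fin_num := integrable_fin_num measurableT hY.
rewrite -lee_fin /Ex /Rintegral fineK //.
rewrite -(cvg_lim _ hcvg) //; apply: lime_le; first by apply/cvg_ex; eexists; exact: hcvg.
apply: nearW => n.
rewrite -(fineK (integrable_fin_num measurableT (hint n))) lee_fin.
have := htr n; rewrite /Rintegral => <-.
apply: ub_le_sup; last by exists n%:R.
by exists (Ex Y); exact: CV_ub.
Qed.

Lemma integD Y Z : integ Y -> integ Z -> integ (fun w => Y w + Z w).
Proof.
move=> hY hZ; have := integrableD measurableT hY hZ.
by apply: eq_integrable => // w _ /=; rewrite EFinD.
Qed.

Lemma chain (n : nat) (sigma : {set 'I_n} -> T -> R)
  (hmono : forall w : T, nondecreasing_setfun (fun X => sigma X w))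
  (hsub : forall w : T, submodular_setfun (fun X => sigma X w))
  (hint : forall X : {set 'I_n}, integ (sigma X)) (Xb : {set 'I_n}) (s : seq 'I_n) :
  Ex (sigma (Xb :|: [set:: s])) <=
  Ex (sigma Xb) + \sum_(j <- s) (Ex (sigma (j |: Xb)) - Ex (sigma Xb)).
Proof.
elim: s => [|j s IH].
  have -> : Xb :|: [set:: [::]] = Xb by apply/setP => i; rewrite !inE orbF.
  by rewrite big_nil addr0.
rewrite big_cons.
set B := Xb :|: [set:: s]; set A := j |: Xb.
have -> : Xb :|: [set:: j :: s] = A :|: B.
  apply/setP => i; rewrite !inE.
  by case: (i == j); case: (i \in Xb); case: (i \in s).
have h1 : Ex (sigma (A :|: B)) + Ex (sigma (A :&: B)) <= Ex (sigma A) + Ex (sigma B).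
  have h := @le_Rintegral _ _ _ P setT (fun x => sigma (A :|: B) x + sigma (A :&: B) x)
    (fun x => sigma A x + sigma B x) measurableT (integD (hint _) (hint _))
    (integD (hint _) (hint _)) (fun w _ => hsub w A B).
  rewrite !RintegralD // in h; try exact: hint.
have h2 : Ex (sigma Xb) <= Ex (sigma (A :&: B)).
  apply: (@le_Rintegral _ _ _ P setT _ _ measurableT (hint _) (hint _)) => w _.
  by apply: hmono; rewrite finset.subsetI finset.subsetUr finset.subsetUl.
move: IH; rewrite -/B => IH; lra.
Qed.
End Helpers.

End CVH.
Import CVH.

Theorem proposition1 (n : nat) (d : measure_display) (T : measurableType d)
  (R : realType) (P : probability T R)
  (sigma : {set 'I_n} -> T -> R)
  (hmono : forall w : T, nondecreasing_setfun (fun X => sigma X w))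
  (hsub : forall w : T, submodular_setfun (fun X => sigma X w))
  (hint : forall X : {set 'I_n}, P.-integrable [set: T] (fun w => (sigma X w)%:E))
  (calX : {set {set 'I_n}}) (alpha : R) (halpha0 : 0 < alpha) (halpha1 : alpha <= 1)
  (Xbar : {set 'I_n}) :
  forall (x : {set 'I_n}) (psi : R), x \in calX ->
    psi <= CVaR P alpha (sigma x) ->
    psi <= CVaR P alpha (sigma Xbar) +
      \sum_(j in ~: Xbar)
        (CVaR P 1 (sigma (j |: Xbar)) - CVaR P alpha (sigma Xbar)) * (j \in x)%:R.
Proof.
move=> x psi _ hpsi.
have a01 : (0:R) < 1 by [].
have a11 : (1:R) <= 1 by [].
rewrite (CVaRE halpha0 halpha1 (hint x)) in hpsi.
rewrite (CVaRE halpha0 halpha1 (hint Xbar)).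
under eq_bigr do rewrite (CVaRE a01 a11 (hint _)).
set C := CV P alpha (sigma Xbar).
have -> : \sum_(j in ~: Xbar) (CV P 1 (sigma (j |: Xbar)) - C) * (j \in x)%:R =
    \sum_(j <- enum (x :\: Xbar)) (CV P 1 (sigma (j |: Xbar)) - C).
  rewrite big_enum big_mkcond [RHS]big_mkcond /=; apply: eq_bigr => j _.
  by rewrite !inE; case: (j \in x); case: (j \in Xbar); rewrite ?mulr1 ?mulr0.
have hsubx : forall w, sigma x w <= sigma (Xbar :|: [set:: enum (x :\: Xbar)]) w.
  move=> w; apply: hmono; apply/fintype.subsetP => i ix.
  by rewrite !inE mem_enum !inE ix andbT; case: (i \in Xbar).
case E: (enum (x :\: Xbar)) hsubx => [|j0 s'] hsubx.
  rewrite big_nil addr0; apply: (le_trans hpsi); apply: (CV_mono halpha0 halpha1 (hint _) (hint _)) => w.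
  have := hsubx w.
  by have -> : Xbar :|: [set:: [::]] = Xbar by apply/setP => i; rewrite !inE orbF.
have hc := chain hmono hsub hint Xbar (j0 :: s').
have e1 := CV_le_Ex halpha0 halpha1 (hint x).
have e2 : Ex P (sigma x) <= Ex P (sigma (Xbar :|: [set:: j0 :: s'])).
  exact: (@le_Rintegral _ _ _ P setT _ _ measurableT (hint _) (hint _)).
have e3 := CV_le_Ex halpha0 halpha1 (hint Xbar).
have e4 : forall j, Ex P (sigma (j |: Xbar)) <= CV P 1 (sigma (j |: Xbar)).
  by move=> j; exact: Ex_le_CV1 (hint _).
rewrite !big_cons in hc *.
have e5 : \sum_(j <- s') (Ex P (sigma (j |: Xbar)) - Ex P (sigma Xbar)) <=
    \sum_(j <- s') (CV P 1 (sigma (j |: Xbar)) - C).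
  apply: ler_sum => j _; have := e4 j; rewrite /C; lra.
have := e4 j0; rewrite /C; lra.
Qed.
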